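(* The $\sigma$-algebra $\mathcal{M}$ of $\mu$-measurable subsets of $\mathbb{R}_{>0}$ coincides with the $\sigma$-algebra of Lebesgue measurable subsets of $\mathbb{R}_{>0}$, and for every $E\in\mathcal{M}$, $$\mu(E)=\exp\Big(\int_E\frac{dx}{x}\Big)$$ (with the convention $\exp(+\infty)=+\infty$).
   Context: $\mathbb{R}_{>0}=(0,\infty)$ carries the usual topology. For a closed interval $I=[a,b]$ with $0<a<b<\infty$, set $\ell(I)=b\cdot a^{-1}$. A cover of a set $E\subseteq\mathbb{R}_{>0}$ is a countable collection $S$ of closed intervals $[a,b]$ with $0<a<b<\infty$ such that $E\subseteq\bigcup_{I\in S}I$; set $\nu(S)=\prod_{I\in S}\ell(I)\in[1,+\infty]$ (a product of factors $\ge1$, equal to the supremum of its finite partial products, independent of ordering). The exterior measure of $E\subseteq\mathbb{R}_{>0}$ is $\mu_e(E)=\inf_S \nu(S)$, the infimum over all covers $S$ of $E$. A set $E\subseteq\mathbb{R}_{>0}$ is $\mu$-measurable if for every $\epsilon>0$ there is an open set $G\subseteq\mathbb{R}_{>0}$ with $E\subseteq G$ and $\mu_e(G\setminus E)<1+\epsilon$; for such $E$, $\mu(E):=\mu_e(E)$, and $\mathcal{M}$ denotes the collection of $\mu$-measurable sets. *)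

(* Defs.v *)
From HB Require Import structures.
From mathcomp Require Import all_boot all_order all_algebra.
From mathcomp Require Import all_classical all_reals all_analysis.
Set Implicit Arguments. Unset Strict Implicit. Unset Printing Implicit Defensive.
Import Order.TTheory GRing.Theory Num.Theory.
Import numFieldNormedType.Exports.
Local Open Scope classical_set_scope.
Local Open Scope ring_scope.

Section mult_measure.
Context {R : realType}.

(* A closed interval [a,b] with 0 < a < b < oo is encoded by the pair (a,b).
   A cover of E is a countable set S of such pairs whose intervals cover E. *)
Definition is_cover (E : set R) (S : set (R * R)) : Prop :=
  [/\ countable S,
      (forall p, S p -> 0 < p.1 /\ p.1 < p.2) &
      E `<=` \bigcup_(p in S) [set` `[p.1, p.2]]].

(* nu(S) = prod_{I in S} l(I), l([a,b]) = b/a, defined as the supremum of the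
   finite partial products (product over finite, duplicate-free lists of
   elements of S). *)
Definition nu (S : set (R * R)) : \bar R :=
  ereal_sup [set (\prod_(p <- s) (p.2 / p.1))%:E
            | s in [set s : seq (R * R) | uniq s /\ (forall p, p \in s -> S p)]].

Definition mu_e (E : set R) : \bar R :=
  ereal_inf [set nu S | S in is_cover E].

(* mu-measurable subsets of R_{>0}; open subsets of R_{>0} (subspace
   topology) are exactly the open subsets of R contained in R_{>0}. *)
Definition mu_measurable (E : set R) : Prop :=
  E `<=` [set` `]0, +oo[] /\
  forall eps : R, 0 < eps ->
    exists G : set R, [/\ open G, G `<=` [set` `]0, +oo[], E `<=` G &
      (mu_e (G `\` E) < (1 + eps)%:E)%E].

(* Lebesgue measurable sets: the Caratheodory sigma-algebra of the Lebesgue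
   outer measure, i.e. the domain of the completed Lebesgue measure. *)
Definition lebesgue_measurable (E : set R) : Prop :=
  ((@wlength R idfun)^*)%mu.-cara.-measurable E.

End mult_measure.

(* Main.v *)
Require Import Defs.
From HB Require Import structures.
From mathcomp Require Import all_boot all_order all_algebra.
From mathcomp Require Import all_classical all_reals all_analysis.
From mathcomp Require Import measurable_realfun.
From mathcomp Require Import ring lra.
Import Order.TTheory GRing.Theory Num.Theory.
Import numFieldNormedType.Exports.
Local Open Scope classical_set_scope.
Local Open Scope ring_scope.
Section S.
Context {R : realType}.
Definition LT : measurableType _ := caratheodory_type (R:=R) (wlength (@idfun R))^*%mu.
Notation CL := (@completed_lebesgue_measure R).
Definition hf (x : R) : \bar R := if (0 < x)%R then (x^-1)%:E else 0%E.
Lemma hf_mB : measurable_fun [set: measurableTypeR R] hf.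
Proof.
apply: measurable_fun_if => //.
- apply: (@measurable_fun_ltr _ _ _ _ (cst 0) idfun) => //.
  exact: measurable_id.
- rewrite setTI.
  have -> : (fun x : R => (0 < x)%R) @^-1` [set true] = `]0, +oo[%classic.
    by apply/seteqP; split => x /=; rewrite in_itv/= andbT.
  apply/measurable_EFinP.
  apply: open_continuous_measurable_fun; first exact: interval_open.
  move=> x; rewrite inE/= in_itv/= andbT => x0.
  by apply: inv_continuous; rewrite gt_eqF.
Qed.
Lemma hf_ge0 x : (0 <= hf x)%E.
Proof. by rewrite /hf; case: ifPn => // x0; rewrite lee_fin invr_ge0 ltW. Qed.
Lemma id_mfun : measurable_fun [set: LT] (fun x : LT => (x : measurableTypeR R)).
Proof. move=> _ B mB; rewrite setTI; exact: sub_caratheodory. Qed.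
Lemma hf_mL : measurable_fun [set: LT] hf.
Proof. exact: (measurableT_comp hf_mB id_mfun). Qed.
Definition nuL (A : set LT) : \bar R := (\int[CL]_(x in A) hf x)%E.
Let nuL0 : nuL set0 = 0%E. Proof. exact: integral_set0. Qed.
Let nuL_ge0 A : (0 <= nuL A)%E. Proof. by apply: integral_ge0 => x _; exact: hf_ge0. Qed.
Let nuL_ssa : semi_sigma_additive nuL.
Proof. exact: (semi_sigma_additive_nng_induced hf_mL hf_ge0). Qed.
HB.instance Definition _ := isMeasure.Build _ _ _ nuL nuL0 nuL_ge0 nuL_ssa.
Local Open Scope ereal_scope.
Lemma nuL_borel {D : set (measurableTypeR R)} : measurable D ->
  nuL D = \int[lebesgue_measure]_(x in D) hf x.
Proof.
move=> mD.
have := @ge0_integral_pushforward _ _ LT (measurableTypeR R) R (fun x => x) id_mfun CL D hf mD (measurable_funS measurableT (subsetT _) hf_mB) (fun y _ => hf_ge0 y).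
by move=> ->.
Qed.

Lemma nuL_cc (a b : R) : (0 < a)%R -> (a < b)%R ->
  nuL `[a, b] = (ln b - ln a)%:E.
Proof.
move=> a0 ab.
rewrite (nuL_borel (measurable_itv `[a, b]%R)) .
transitivity (\int[lebesgue_measure]_(x in `[a, b]) (x^-1)%:E).
  apply: eq_integral => x; rewrite inE/= in_itv/= => /andP[ax _].
  by rewrite /hf (lt_le_trans a0 ax).
rewrite (@continuous_FTC2 _ GRing.inv (@ln R)) ?EFinB//.
- apply: continuous_in_subspaceT => x; rewrite inE/= in_itv/= => /andP[ax _].
  by apply: inv_continuous; rewrite gt_eqF// (lt_le_trans a0 ax).
- split.
  + move=> x; rewrite in_itv/= => /andP[ax _].
    by apply: ex_derive; apply: is_derive1_ln; rewrite (lt_trans a0 ax).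
  + by apply: cvg_at_right_filter; apply: continuous_ln.
  + by apply: cvg_at_left_filter; apply: continuous_ln; rewrite (lt_trans a0 ab).
- move=> x; rewrite in_itv/= => /andP[ax _].
  rewrite derive1E; apply: derive_val.
  by apply: is_derive1_ln; rewrite (lt_trans a0 ax).
Qed.
Lemma BL {A : set (measurableTypeR R)} : measurable A -> measurable (A : set LT).
Proof. exact: sub_caratheodory. Qed.

Lemma nuL_le_CL (A : set LT) (c : R) : measurable A -> (0 < c)%R ->
  A `<=` `[c, +oo[%classic -> nuL A <= (c^-1)%:E * CL A.
Proof.
move=> mA c0 Ac.
rewrite -integral_cst//; apply: ge0_le_integral => //.
- by move=> x _; exact: hf_ge0.
- exact: measurable_funS measurableT (subsetT _) hf_mL.
- move=> x xA; have := Ac x xA; rewrite /= in_itv/= andbT => cx.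
  rewrite /hf (lt_le_trans c0 cx) lee_fin lef_pV2// posrE (lt_le_trans c0 cx)//.
Qed.

Lemma CL_le_nuL (A : set LT) (c : R) : measurable A -> (0 < c)%R ->
  A `<=` `]0%R, c]%classic -> (c^-1)%:E * CL A <= nuL A.
Proof.
move=> mA c0 Ac.
rewrite -integral_cst//; apply: ge0_le_integral => //.
- by move=> x _; rewrite lee_fin invr_ge0 ltW.
- exact: measurable_funS measurableT (subsetT _) hf_mL.
- move=> x xA; have := Ac x xA; rewrite /= in_itv/= => /andP[x0 xc].
  rewrite /hf x0 lee_fin lef_pV2// posrE//.
Qed.

Lemma nuL_set1 (a : R) : (0 < a)%R -> nuL [set a] = 0.
Proof.
move=> a0; apply/eqP; rewrite eq_le measure_ge0 andbT.
have := @nuL_le_CL [set a] a (BL (measurable_set1 a)) a0.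
rewrite (_ : CL [set a] = 0); last exact: lebesgue_measure_set1.
rewrite mule0; apply; move=> x /= ->; by rewrite in_itv/= lexx.
Qed.

Lemma nuL_oo (a b : R) : (0 < a)%R -> (a < b)%R ->
  nuL `]a, b[ = (ln b - ln a)%:E.
Proof.
move=> a0 ab; apply/eqP; rewrite eq_le -nuL_cc//; apply/andP; split.
  rewrite le_measure ?inE//; try exact: BL (measurable_itv _).
  exact: subset_itv_oo_cc.
have -> : `[a, b]%classic = [set a] `|` ([set b] `|` `]a, b[%classic).
  apply/seteqP; split => x /=; rewrite !in_itv/=.
    move=> /andP[ax xb]; have [->|xa] := eqVneq x a; first by left.
    have [->|xb'] := eqVneq x b; first by right; left.
    by right; right; rewrite !lt_neqAle ax xb eq_sym xa xb'.
  case=> [->|[->|/andP[ax xb]]]; first by rewrite lexx ltW.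
    by rewrite lexx ltW.
  by rewrite !ltW.
have m1 x : measurable ([set x] : set LT) by exact: BL (measurable_set1 x).
have mo : measurable (`]a, b[%classic : set LT) by exact: BL (measurable_itv _).
have mU : measurable ([set b] `|` `]a, b[%classic : set LT) by exact: measurableU.
apply: (le_trans (measureU2 _ _ _)) => //.
change (nuL [set a] + nuL ([set b] `|` `]a, b[%classic) <= nuL `]a, b[%classic).
rewrite nuL_set1// add0e; apply: (le_trans (measureU2 _ _ _)) => //.
change (nuL [set b] + nuL `]a, b[%classic <= nuL `]a, b[%classic).
by rewrite nuL_set1 ?(lt_trans a0)// add0e.
Qed.
Lemma BLo (G : set R) : open G -> measurable (G : set LT).
Proof. by move=> oG; apply: BL; exact: open_measurable. Qed.

Lemma CL_itv (i : interval R) : CL [set` i] = lebesgue_measure [set` i].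
Proof. by []. Qed.

Lemma CL_oo_fin (a b : R) : CL `]a, b[%classic < +oo.
Proof.
rewrite CL_itv lebesgue_measure_itv/=; case: ifP => _; last by rewrite ltry.
by rewrite -EFinB ltry.
Qed.

Lemma open_approx (E : set LT) (d : R) : measurable E ->
  E `<=` `]0%R, +oo[%classic -> (0 < d)%R ->
  exists G : set R, [/\ open G, G `<=` `]0%R, +oo[%classic, E `<=` G &
    nuL (G `\` E) <= d%:E].
Proof.
move=> mE Epos d0.
pose P (k : nat) : set R := `]((k.+1%:R)^-1)%R, k.+1%:R[%classic.
have mP k : measurable (P k : set LT) by exact: BL (measurable_itv _).
pose e (k : nat) : R := (d / (k.+1%:R * (2 ^ k.+1)%:R))%R.
have e0 k : (0 < e k)%R by rewrite divr_gt0// mulr_gt0.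
have H k : exists U : set R, [/\ open U, E `&` P k `<=` U &
    lebesgue_measure U <= CL (E `&` P k) + (e k)%:E].
  exact: outer_measure_open_le.
have [U HU] := choice H.
pose V k := U k `&` P k.
have oV k : open (V k).
  by apply: openI; [case: (HU k)|exact: interval_open].
have mV k : measurable (V k : set LT) by exact: BLo.
have mEP k : measurable (E `&` P k) by exact: measurableI.
have VE k : nuL (V k `\` E) <= (d / (2 ^ k.+1)%:R)%:E.
  have cpos : (0 < (k.+1%:R)^-1 :> R)%R by rewrite invr_gt0.
  have sub : V k `\` E `<=` `[((k.+1%:R)^-1)%R, +oo[%classic.
    move=> x [[_]]; rewrite /P /= !in_itv/= andbT => /andP[/ltW ? _] _ //.
  have := @nuL_le_CL (V k `\` E) _ (measurableD (mV k) mE) cpos sub.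
  move/le_trans; apply.
  rewrite invrK.
  have fin : CL (E `&` P k) \is a fin_num.
    rewrite ge0_fin_numE//; apply: (@le_lt_trans _ _ (CL (P k))).
      by rewrite le_measure ?inE//; exact: subIsetr.
    exact: CL_oo_fin.
  have CVE : CL (V k `\` E) <= (e k)%:E.
    have -> : V k `\` E = V k `\` (E `&` P k).
      apply/seteqP; split => x [Vx nE]; split => //.
        by move=> [].
      by move=> Ex; apply: nE; split => //; case: Vx.
    rewrite measureD//; last first.
      apply: (@le_lt_trans _ _ (CL (P k))).
        by rewrite le_measure ?inE//; exact: subIsetr.
      exact: CL_oo_fin.
    have -> : V k `&` (E `&` P k) = E `&` P k.
      apply/seteqP; split => x; first by case.
      move=> [Ex Px]; split => //; split => //.
      by case: (HU k) => _ + _; apply; split.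
    case: (HU k) => oU _ HUk.
    rewrite leeBlDl// (le_trans _ HUk)//.
    rewrite le_measure ?inE//; first exact: BLo oU.
    exact: subIsetl.
  apply: (le_trans (lee_wpmul2l _ CVE)); first by rewrite lee_fin.
  rewrite -EFinM lee_fin /e le_eqVlt; apply/orP; left; apply/eqP.
  have h1 : (k.+1%:R : R) != 0%R by rewrite pnatr_eq0.
  have h2 : ((2 ^ k.+1)%:R : R) != 0%R by rewrite pnatr_eq0 expn_eq0.
  by field; apply/andP.
exists (\bigcup_k V k); split.
- by apply: bigcup_open => k _; exact: oV.
- by move=> x [k _ [_]]; rewrite /P/= !in_itv/= andbT => /andP[+ _];
    apply: lt_trans; rewrite invr_gt0.
- move=> x Ex; have := Epos x Ex; rewrite /= in_itv/= andbT => x0.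
  pose k := Num.bound (x + x^-1)%R.
  have ix0 : (0 < x^-1)%R by rewrite invr_gt0.
  have hk : (x + x^-1 < k%:R)%R by apply: archi_boundP; rewrite addr_ge0// ltW.
  have hk1 : (k%:R < k.+1%:R :> R)%R by rewrite ltr_nat.
  have Pk : P k x.
    rewrite /P /= in_itv/=; apply/andP; split; last by lra.
    rewrite -[x in (_ < x)%R]invrK ltf_pV2 ?posrE//; first by lra.
  exists k => //; split => //.
  by case: (HU k) => _ + _; apply; split.
- pose F k := V k `\` E.
  have mF k : measurable (F k : set LT) by exact: measurableD.
  have mG : measurable ((\bigcup_k V k) `\` E : set LT).
    apply: measurableD => //; apply: bigcupT_measurable => k; exact: mV.
  apply: (le_trans (measure_sigma_subadditive _ mF mG _)).
    by move=> x [[k _ Vx] nE]; exists k.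
  apply: (le_trans (lee_nneseries _ _)).
  + by move=> k _ _; exact: measure_ge0.
  + by move=> k _; exact: (VE k).
  exact: epsilon_trick0 (ltW d0).
Qed.
Lemma bigsetU_measurable (F : R * R -> set LT) (s : seq (R * R)) :
  (forall p, measurable (F p)) -> measurable (\big[setU/set0]_(p <- s) F p).
Proof. by move=> mF; elim/big_ind: _ => //; exact: measurableU. Qed.

Lemma nuL_bigsetU_le (F : R * R -> set LT) (s : seq (R * R)) :
  (forall p, measurable (F p)) ->
  nuL (\big[setU/set0]_(p <- s) F p) <= \sum_(p <- s) nuL (F p).
Proof.
move=> mF; elim: s => [|p s IH]; first by rewrite !big_nil measure0.
rewrite !big_cons; apply: (le_trans (measureU2 _ _ _)) => //.
  exact: bigsetU_measurable.
change (nuL (F p) + nuL (\big[setU/set0]_(j <- s) F j) <=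
  nuL (F p) + \sum_(j <- s) nuL (F j)).
by rewrite leeD2l.
Qed.

Lemma sum_nuL_cc (s : seq (R * R)) : (forall p, p \in s -> (0 < p.1)%R /\ (p.1 < p.2)%R) ->
  \sum_(p <- s) nuL `[p.1, p.2] = (ln (\prod_(p <- s) (p.2 / p.1)))%:E /\
  (0 < \prod_(p <- s) (p.2 / p.1))%R.
Proof.
elim: s => [|p s IH] H; first by rewrite !big_nil ln1.
have [p0 p12] := H p (mem_head _ _).
have [IH1 IH2] : _ := IH (fun q qs => H q ltac:(by rewrite in_cons qs orbT)).
have p20 : (0 < p.2)%R by exact: lt_trans p0 p12.
have q0 : (0 < p.2 / p.1)%R by exact: divr_gt0.
rewrite !big_cons IH1 nuL_cc//; split; last exact: mulr_gt0.
rewrite lnM ?posrE// ln_div ?posrE//.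
Qed.
Lemma bigsetU_mem (T : Type) (F : R * R -> set T) (s : seq (R * R)) x :
  (\big[setU/set0]_(p <- s) F p) x <-> exists2 p, p \in s & F p x.
Proof.
elim: s => [|q s IH]; first by rewrite big_nil; split => // -[].
rewrite big_cons; split.
  case=> [Fq|/IH[p ps Fp]]; first by exists q => //; rewrite mem_head.
  by exists p => //; rewrite in_cons ps orbT.
move=> [p]; rewrite in_cons => /orP[/eqP->|ps] Fp; first by left.
by right; apply/IH; exists p.
Qed.

Lemma cover_lb (A : set R) (S : set (R * R)) : is_cover A S ->
  exists B : set R, [/\ measurable (B : set LT), B `<=` `]0%R, +oo[%classic,
    A `<=` B & expeR (nuL B) <= nu S].
Proof.
case=> cS Spos AS.
pose I (p : R * R) : set R := `[p.1, p.2]%classic.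
have mI p : measurable (I p : set LT) by exact: BL (measurable_itv _).
have nuS1 s : uniq s -> (forall p, p \in s -> S p) ->
    (\prod_(p <- s) (p.2 / p.1))%:E <= nu S.
  by move=> us sS; apply: ereal_sup_ubound; exists s.
have nuS_ge1 : 1 <= nu S.
  by have := nuS1 [::] erefl (fun p (h : p \in [::]) => ltac:(by [])); rewrite big_nil.
exists (\bigcup_(p in S) I p).
have Bpos : \bigcup_(p in S) I p `<=` `]0%R, +oo[%classic.
  move=> x [p Sp]; rewrite /I/= !in_itv/= andbT => /andP[px _].
  by have [p0 _] := Spos p Sp; exact: lt_le_trans px.
have [S0|/set0P[p0 Sp0]] := eqVneq S set0.
  rewrite S0 bigcup_set0; split => //; try (by move=> x /AS; rewrite S0 bigcup_set0).
  by rewrite measure0 expeR0 -S0.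
have /pcard_surjP[g gS] := cS.
pose f n := if pselect (S (g n)) then g n else p0.
have fS n : S (f n) by rewrite /f; case: pselect.
have Sf p : S p -> exists n, f n = p.
  move=> Sp; have [n _ gnp] := gS p Sp; exists n.
  by rewrite /f; case: pselect => //; rewrite gnp.
pose Bn n := \big[setU/set0]_(p <- undup [seq f k | k <- iota 0 n]) I p.
have BnE n x : Bn n x <-> exists2 k, (k < n)%N & I (f k) x.
  rewrite /Bn bigsetU_mem; split.
    by move=> [p]; rewrite mem_undup => /mapP[k]; rewrite mem_iota => /andP[_ kn] -> ?; exists k.
  move=> [k kn Ifk]; exists (f k) => //; rewrite mem_undup; apply/mapP; exists k => //.
  by rewrite mem_iota.
have BE : \bigcup_(p in S) I p = \bigcup_n Bn n.
  apply/seteqP; split => x.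
    move=> [p Sp Ipx]; have [k fk] := Sf p Sp; exists k.+1 => //.
    by apply/BnE; exists k => //; rewrite fk.
  by move=> [n _ /BnE[k _ Ifk]]; exists (f k) => //; exact: fS.
have mBn n : measurable (Bn n : set LT) by exact: bigsetU_measurable.
have mB : measurable (\bigcup_n Bn n : set LT) by exact: bigcupT_measurable.
rewrite BE; split => //; first by rewrite -BE.
  by rewrite -BE.
have nd : nondecreasing_seq (Bn : nat -> set LT).
  move=> n m nm; apply/subsetPset => x /BnE[k kn Ifk]; apply/BnE; exists k => //.
  exact: leq_trans nm.
have cv := @nondecreasing_cvg_mu _ _ _ nuL _ mBn mB nd.
have nuS0 : nu S \in `[0, +oo].
  by rewrite in_itv/= leey andbT (le_trans _ nuS_ge1).
have : nuL (\bigcup_n Bn n) <= lne (nu S).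
  rewrite -(cvg_lim _ cv)//; apply: lime_le; first by apply/cvg_ex; eexists; exact: cv.
  apply: nearW => n /=.
  rewrite /Bn; set s := undup _.
  have us : uniq s by exact: undup_uniq.
  have sS p : p \in s -> S p.
    by rewrite mem_undup => /mapP[k _ ->]; exact: fS.
  have [H1 H2] := @sum_nuL_cc s (fun p ps => Spos p (sS p ps)).
  have := @nuL_bigsetU_le I s mI; move/le_trans; apply.
  rewrite H1 -lne_EFin// lee_lne ?nuS1//.
  by rewrite in_itv/= leey andbT lee_fin ltW.
move=> h; rewrite -[leRHS]lneK//; rewrite lee_expeR//.
Qed.
Lemma nuL_bigsetU_eq (F : R * R -> set LT) (s : seq (R * R)) :
  (forall p, measurable (F p)) -> uniq s ->
  {in s &, forall p q, p != q -> F p `&` F q = set0} ->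
  nuL (\big[setU/set0]_(p <- s) F p) = \sum_(p <- s) nuL (F p).
Proof.
move=> mF; elim: s => [|p s IH]; first by rewrite !big_nil measure0.
move=> /= /andP[ps us] dis.
rewrite !big_cons measureU//; last 2 first.
- exact: bigsetU_measurable.
- apply/seteqP; split => // x [Fpx /bigsetU_mem[q qs Fqx]].
  have pq : p != q by apply: contraNneq ps => ->.
  have qs2 : q \in p :: s by rewrite in_cons qs orbT.
  have := dis p q (mem_head _ _) qs2 pq.
  by move/seteqP => [+ _] => /(_ x (conj Fpx Fqx)).
congr (_ + _); apply: IH => //.
by move=> a b a_s b_s; apply: dis; rewrite in_cons ?a_s ?b_s orbT.
Qed.

Lemma comp_props (J : set R) (K : R) : open J -> is_interval J ->
  J `<=` `]0%R, +oo[%classic -> J !=set0 ->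
  (forall x y, J x -> J y -> (x < y)%R -> (ln y - ln x <= K)%R) ->
  [/\ (0 < inf J)%R, (inf J < sup J)%R, J `<=` `[inf J, sup J]%classic &
      `]inf J, sup J[%classic `<=` J].
Proof.
move=> oJ iJ Jpos [x0 Jx0] HK.
have pos y : J y -> (0 < y)%R by move=> /Jpos; rewrite /= in_itv/= andbT.
have x0p := pos _ Jx0.
set k := `|K|%R.
have Kk : (K <= k)%R by exact: ler_norm.
have ub : ubound J (x0 * expR k)%R.
  move=> y Jy; have [yx0|x0y] := leP y x0.
    rewrite (le_trans yx0)// ler_peMr ?(ltW x0p)//.
    by rewrite -expR0 ler_expR normr_ge0.
  have := HK _ _ Jx0 Jy x0y => h.
  rewrite -[y]lnK ?posrE ?pos// -[x0 in (x0 * _)%R]lnK ?posrE// -expRD ler_expR.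
  by lra.
have lb : lbound J (x0 * expR (- k))%R.
  move=> y Jy; have [yx0|x0y] := leP x0 y.
    rewrite (le_trans _ yx0)// ger_pMr// -expR0 ler_expR.
    by rewrite oppr_le0 normr_ge0.
  have := HK _ _ Jy Jx0 x0y => h.
  rewrite -[y]lnK ?posrE ?pos// -[x0 in (x0 * _)%R]lnK ?posrE// -expRD ler_expR.
  by lra.
have hs : has_sup J by split; [exists x0|exists (x0 * expR k)%R].
have hi : has_inf J by split; [exists x0|exists (x0 * expR (- k))%R].
have inf0 : (0 < inf J)%R.
  apply: (lt_le_trans _ (lb_le_inf _ lb)); last by exists x0.
  by rewrite mulr_gt0// expR_gt0.
have [e e0 be] : exists2 e : R, (0 < e)%R & ball x0 e `<=` J.
  have : nbhs x0 J by rewrite nbhsE/=; exists J.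
  by move/nbhs_ballP => [e e0 H]; exists e.
have Jx1 : J (x0 + e / 2)%R.
  apply: be; rewrite /ball/= opprD addrA subrr sub0r normrN ger0_norm.
    by rewrite ltr_pdivrMr// ltr_pMr// ltr1n.
  by rewrite divr_ge0// ltW.
split => //.
- apply: (le_lt_trans (ge_inf hi.2 Jx0)).
  apply: (lt_le_trans _ (sup_upper_bound hs Jx1)).
  by rewrite ltrDl divr_gt0.
- move=> y Jy; rewrite /= in_itv/=; apply/andP; split.
    by have := ge_inf (proj2 hi); apply.
  by have := sup_upper_bound hs; apply.
- move=> y; rewrite /= in_itv/= => /andP[iy ys].
  have e1 : (0 < y - inf J)%R by rewrite subr_gt0.
  have e2 : (0 < sup J - y)%R by rewrite subr_gt0.
  have [z Jz zy] := inf_adherent e1 hi.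
  have [w Jw yw] := sup_adherent e2 hs.
  apply: (iJ z w Jz Jw); apply/andP; split.
    by apply: ltW; move: zy; rewrite addrC subrK.
  by apply: ltW; move: yw; rewrite opprB addrC subrK.
Qed.
Lemma cover_ub (E : set LT) (d : R) : measurable E ->
  E `<=` `]0%R, +oo[%classic -> nuL E < +oo -> (0 < d)%R ->
  exists S, is_cover E S /\ nu S <= expeR (nuL E + d%:E).
Proof.
move=> mE Epos Efin d0.
have [G [oG Gpos EG GE]] := open_approx E d mE Epos d0.
have mG : measurable (G : set LT) := BLo G oG.
have hG : nuL G = nuL E + nuL (G `\` E).
  rewrite -{1}(setDUK EG); apply: measureU => //; first exact: measurableD.
  exact: setDIK.
have nuG : nuL G <= nuL E + d%:E by rewrite hG leeD2l.
have Gfin : nuL G < +oo by apply: (le_lt_trans nuG); rewrite lte_add_pinfty// ltry.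
set K := fine (nuL G).
have nuGK : nuL G = K%:E by rewrite fineK // ge0_fin_numE.
pose J := open_disjoint_itv oG.
have oJ q : open (J q) := @open_disjoint_itv_open _ _ oG q.
have iJ q : is_interval (J q) := @open_disjoint_itv_is_interval _ _ oG q.
have tJ : trivIset setT J := @open_disjoint_itv_trivIset _ _ oG.
have GJ : G = \bigcup_q J q := open_disjoint_itv_bigcup oG.
have JG q : J q `<=` G by rewrite [X in _ `<=` X]GJ => x Jx; exists q.
have HK q x y : J q x -> J q y -> (x < y)%R -> (ln y - ln x <= K)%R.
  move=> Jx Jy xy.
  have x0 : (0 < x)%R by have := Gpos x (JG q x Jx); rewrite /= in_itv/= andbT.
  rewrite -lee_fin -nuGK -nuL_oo//.
  rewrite le_measure ?inE//; first exact: BL (measurable_itv _).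
  move=> z; rewrite /= in_itv/= => /andP[xz zy]; apply: (JG q).
  by apply: (iJ q x y Jx Jy); rewrite !ltW.
pose a q := inf (J q); pose b q := sup (J q).
have CP q : J q !=set0 -> [/\ (0 < a q)%R, (a q < b q)%R,
    J q `<=` `[a q, b q]%classic & `]a q, b q[%classic `<=` J q].
  move=> ne; apply: comp_props => //; first exact: subset_trans (JG q) Gpos.
  exact: HK.
pose Q := [set q | J q !=set0].
pose S := (fun q => (a q, b q)) @` Q.
have Spos p : S p -> (0 < p.1)%R /\ (p.1 < p.2)%R.
  by move=> [q Qq <-] /=; have [h1 h2 _ _] := CP q Qq.
exists S; split.
- split => //.
  + by apply: sub_countable (card_image_le _ _) _; exact: countableP.
  + move=> x Ex; have := EG x Ex; rewrite [X in X x -> _]GJ => -[q _ Jqx].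
    have Qq : Q q by exists x.
    exists (a q, b q); first by exists q.
    by have [_ _ h _] := CP q Qq; exact: h.
apply: (@le_trans _ _ (expeR (nuL G))); last by rewrite lee_expeR.
apply: ge_ereal_sup => _ [s [us sS] <-].
pose F (p : R * R) : set R := `]p.1, p.2[%classic.
have mF p : measurable (F p : set LT) by exact: BL (measurable_itv _).
have [H1 H2] := @sum_nuL_cc s (fun p ps => Spos p (sS p ps)).
have Hoo : \sum_(p <- s) nuL (F p) = \sum_(p <- s) nuL `[p.1, p.2]%classic.
  apply: eq_big_seq => p ps; have [p0 p12] := Spos p (sS p ps).
  by rewrite nuL_oo ?nuL_cc.
have disj : {in s &, forall p q, p != q -> F p `&` F q = set0}.
  move=> p q ps qs pq; apply/seteqP; split => // x [Fpx Fqx].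
  move: (sS p ps) (sS q qs) pq Fpx Fqx => [q1 Q1 <-] [q2 Q2 <-] pq Fpx Fqx.
  have [_ _ _ h1] := CP q1 Q1; have [_ _ _ h2] := CP q2 Q2.
  have q12 : q1 = q2 by apply: tJ => //; exists x; split; [exact: h1|exact: h2].
  by move: pq; rewrite q12 eqxx.
have sub : \big[setU/set0]_(p <- s) F p `<=` G.
  move=> x /bigsetU_mem[p ps Fpx].
  move: (sS p ps) Fpx => [q Qq <-] Fx.
  by have [_ _ _ h] := CP q Qq; apply: (JG q); exact: h.
have : nuL (\big[setU/set0]_(p <- s) F p) <= nuL G.
  rewrite le_measure ?inE//; exact: bigsetU_measurable.
rewrite nuL_bigsetU_eq// Hoo H1 -lee_expeR /= lnK// posrE//.
Qed.
Lemma nuL_null (N : set LT) : measurable N -> N `<=` `]0%R, +oo[%classic ->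
  nuL N = 0 -> CL N = 0.
Proof.
move=> mN Npos N0.
pose Nk (k : nat) : set LT := N `&` `]0%R, k.+1%:R]%classic.
have mNk k : measurable (Nk k) by apply: measurableI => //; exact: BL (measurable_itv _).
have Nk0 k : CL (Nk k) = 0.
  have kp : (0 < k.+1%:R :> R)%R by rewrite ltr0Sn.
  have := @CL_le_nuL (Nk k) k.+1%:R (mNk k) kp (@subIsetr _ _ _).
  have : nuL (Nk k) <= nuL N by rewrite le_measure ?inE//; exact: subIsetl.
  rewrite N0 => h1 h2; have := le_trans h2 h1.
  rewrite pmule_rle0 ?lee_fin ?invr_gt0// => h3.
  by apply/eqP; rewrite eq_le h3 measure_ge0.
apply/eqP; rewrite eq_le measure_ge0 andbT.
have cov : N `<=` \bigcup_k Nk k.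
  move=> x Nx; have := Npos x Nx; rewrite /= in_itv/= andbT => x0.
  exists (Num.bound x) => //; split => //; rewrite /= in_itv/= x0/=.
  apply: ltW; apply: (lt_trans (archi_boundP (ltW x0))).
  by rewrite ltr_nat.
apply: (le_trans (measure_sigma_subadditive _ mNk mN cov)).
by rewrite eseries0// => k _ _; exact: Nk0.
Qed.
Lemma expeR_EFin (x : R) : expeR x%:E = (expR x)%:E.
Proof. by []. Qed.

Lemma meas_formula (E : set LT) : measurable E -> E `<=` `]0%R, +oo[%classic ->
  mu_e E = expeR (nuL E).
Proof.
move=> mE Epos; apply/eqP; rewrite eq_le; apply/andP; split; last first.
  apply: le_ereal_inf_tmp => _ [S ES <-].
  have [B [mB Bpos EB BS]] := cover_lb _ _ ES.
  apply: le_trans BS; rewrite lee_expeR le_measure ?inE//.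
have [Einf|Efin] := eqVneq (nuL E) +oo.
  by rewrite Einf /= leey.
have Efin' : nuL E < +oo by rewrite ltey.
set x := fine (nuL E).
have xE : nuL E = x%:E by rewrite fineK// ge0_fin_numE.
rewrite xE /=; apply/lee_addgt0Pr => e e0.
have q0 : (0 < e * expR (- x))%R by rewrite mulr_gt0// expR_gt0.
pose d := ln (1 + e * expR (- x))%R.
have d0 : (0 < d)%R by rewrite ln_gt0// ltrDl.
have [S [ES nuS]] := cover_ub E d mE Epos Efin' d0.
apply: (@le_trans _ _ (nu S)); first by apply: ereal_inf_lbound; exists S.
apply: (le_trans nuS); rewrite xE -EFinD /= -EFinD lee_fin.
rewrite expRD lnK ?posrE; last by rewrite addr_gt0.
rewrite mulrDr mulr1 expRN le_eqVlt; apply/orP; left; apply/eqP.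
have : expR x != 0%R by rewrite gt_eqF// expR_gt0.
by move=> ?; field.
Qed.

Lemma open_meas (E : set LT) : measurable E -> E `<=` `]0%R, +oo[%classic ->
  mu_measurable E.
Proof.
move=> mE Epos; split => // eps eps0.
have l0 : (0 < ln (1 + eps))%R by rewrite ln_gt0// ltrDl.
pose d := (ln (1 + eps) / 2)%R.
have d0 : (0 < d)%R by rewrite divr_gt0.
have [G [oG Gpos EG GE]] := open_approx E d mE Epos d0.
exists G; split => //.
have mGE : measurable (G `\` E : set LT) by apply: measurableD => //; exact: BLo.
rewrite meas_formula//; last by move=> x [/Gpos].
apply: (@le_lt_trans _ _ (expeR d%:E)); first by rewrite lee_expeR.
rewrite /= lte_fin -[X in (_ < X)%R]lnK ?posrE ?addr_gt0// ltr_expR.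
by rewrite /d ltr_pdivrMr// ltr_pMr// ltr1n.
Qed.

Lemma meas_of_mu (E : set R) : mu_measurable E -> measurable (E : set LT).
Proof.
move=> [Epos H].
have HB n : exists GB : set R * set R, [/\ open GB.1, E `<=` GB.1,
    measurable (GB.2 : set LT) /\ GB.2 `<=` `]0%R, +oo[%classic,
    GB.1 `\` E `<=` GB.2 & nuL GB.2 <= ((n.+1%:R)^-1)%:E].
  have en : (0 < (n.+1%:R)^-1 :> R)%R by rewrite invr_gt0.
  have [G [oG Gpos EG GE]] := H _ en.
  have [_ [S cS <-] nuS] := ereal_inf_lt GE.
  have [B [mB Bpos GEB BS]] := cover_lb _ _ cS.
  exists (G, B); split; [by []|by []|by split|by []|].
  have l1 : (0 < 1 + (n.+1%:R)^-1 :> R)%R by rewrite addr_gt0.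
  have : expeR (nuL B) <= expeR (ln (1 + (n.+1%:R)^-1))%:E.
    have eE : expeR (ln (1 + (n.+1%:R)^-1 : R))%:E = (1 + (n.+1%:R)^-1 : R)%:E.
      by rewrite expeR_EFin lnK ?posrE.
    by rewrite eE; apply: ltW; exact: le_lt_trans nuS.
  rewrite lee_expeR => h; apply: (le_trans h); rewrite lee_fin.
  by rewrite le_ln1Dx// (lt_le_trans _ (ltW en))// ltrN10.
have [GB HGB] := choice HB.
pose G n := (GB n).1; pose B n := (GB n).2.
pose N := \bigcap_n B n.
have mN : measurable (N : set LT).
  by apply: bigcapT_measurable => n; case: (HGB n) => _ _ [].
have Npos : N `<=` `]0%R, +oo[%classic.
  by move=> x Nx; have [_ _ [_ h] _ _] := HGB 0%N; exact: h (Nx 0%N I).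
have N0 : nuL N = 0.
  apply/eqP; rewrite eq_le measure_ge0 andbT; apply/lee_addgt0Pr => e e0.
  rewrite add0e.
  pose n := Num.bound e^-1.
  have hn : (e^-1 < n%:R)%R by apply: archi_boundP; rewrite invr_ge0 ltW.
  have [_ _ [mBn _] _ h] := HGB n.
  apply: (le_trans _ (le_trans h _)).
    rewrite le_measure ?inE//.
    by move=> x Nx; exact: Nx n I.
  rewrite lee_fin -[X in (_ <= X)%R]invrK lef_pV2 ?posrE ?invr_gt0 ?ltr0Sn//.
  by rewrite (le_trans (ltW hn))// ler_nat.
have CN : CL N = 0 := nuL_null N mN Npos N0.
pose HH := \bigcap_n G n.
have mHH : measurable (HH : set LT).
  by apply: bigcapT_measurable => n; case: (HGB n) => oG _ _ _ _; exact: BLo _ oG.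
have EHH : E `<=` HH by move=> x Ex n _; case: (HGB n) => _ + _ _ _; apply.
have HHEN : HH `\` E `<=` N.
  move=> x [HHx nE] n _; case: (HGB n) => _ _ _ + _; apply; split => //.
  exact: HHx.
have mHHE : measurable (HH `\` E : set LT).
  apply: completed_lebesgue_measure_is_complete.
  by exists N; split.
rewrite -(setIidr EHH) -setDD; exact: measurableD.
Qed.
End S.

Theorem mainTheorem19 (R : realType) :
  (forall E : set R,
     mu_measurable E <-> (E `<=` [set` `]0, +oo[] /\ lebesgue_measurable E)) /\
  (forall E : set R, mu_measurable E ->
     mu_e E = expeR (\int[@completed_lebesgue_measure R]_(x in E) (x^-1)%:E)%E).
Proof.
split.
- move=> E; split.
  + move=> mE; split; first exact: (proj1 mE).
    exact: (@meas_of_mu R E mE).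
  + by move=> [Epos mE]; exact: (@open_meas R E mE Epos).
- move=> E mE.
  have mEL := @meas_of_mu R E mE.
  rewrite (@meas_formula R E mEL (proj1 mE)).
  congr expeR; apply: eq_integral => x; rewrite inE => Ex.
  have := proj1 mE x Ex; rewrite /= in_itv/= andbT => x0.
  by rewrite /hf x0.
Qed.
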